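(* For all terms $s,t$ over $\Sigma_{SCL}(A)$ (possibly containing variables), if $\mathrm{EqFSCL}\vdash s=t$ then $\mathbb M_{se}\models s=t$, i.e. $s$ and $t$ have equal interpretations in $\mathbb M_{se}$ under every assignment of elements of the domain of $\mathbb M_{se}$ to the variables.
   Context: Let $A$ be a nonempty set of atoms. The signature $\Sigma_{SCL}(A)$ consists of the constants $\mathsf T,\mathsf F$, each atom $a\in A$ as a constant, unary negation $\neg$, and two binary connectives written $x\land^\circ y$ (left-sequential, short-circuit conjunction) and $x\lor^\circ y$ (left-sequential, short-circuit disjunction). $\mathcal S_A$ denotes the set of closed terms over $\Sigma_{SCL}(A)$. EqFSCL is the following set of equations in variables $x,y,z$: (F1) $\mathsf F=\neg\mathsf T$; (F2) $x\lor^\circ y=\neg(\neg x\land^\circ\neg y)$; (F3) $\neg\neg x=x$; (F4) $\mathsf T\land^\circ x=x$; (F5) $x\lor^\circ\mathsf F=x$; (F6) $\mathsf F\land^\circ x=\mathsf F$; (F7) $(x\land^\circ y)\land^\circ z=x\land^\circ(y\land^\circ z)$; (F8) $\neg x\land^\circ\mathsf F=x\land^\circ\mathsf F$; (F9) $(x\land^\circ\mathsf F)\lor^\circ y=(x\lor^\circ\mathsf T)\land^\circ y$; (F10) $(x\land^\circ y)\lor^\circ(z\land^\circ\mathsf F)=(x\lor^\circ(z\land^\circ\mathsf F))\land^\circ(y\lor^\circ(z\land^\circ\mathsf F))$. $E\vdash s=t$ means $s=t$ is derivable from the equations $E$ in equational logic (reflexivity, symmetry, transitivity, congruence, substitution).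 Evaluation trees: the set $\mathcal T_A$ is defined inductively by $\mathsf T,\mathsf F\in\mathcal T_A$ and $(X\unlhd a\unrhd Y)\in\mathcal T_A$ for $X,Y\in\mathcal T_A$, $a\in A$ (a binary tree with root labelled $a$, left branch $X$, right branch $Y$, leaves labelled $\mathsf T$ or $\mathsf F$). Leaf replacement is defined by $\mathsf T[\mathsf T\mapsto Y,\mathsf F\mapsto Z]=Y$, $\mathsf F[\mathsf T\mapsto Y,\mathsf F\mapsto Z]=Z$, $(X_1\unlhd a\unrhd X_2)[\mathsf T\mapsto Y,\mathsf F\mapsto Z]=X_1[\mathsf T\mapsto Y,\mathsf F\mapsto Z]\unlhd a\unrhd X_2[\mathsf T\mapsto Y,\mathsf F\mapsto Z]$; an omitted replacement is the identity (e.g. $X[\mathsf T\mapsto Y]=X[\mathsf T\mapsto Y,\mathsf F\mapsto\mathsf F]$). The short-circuit evaluation function $se:\mathcal S_A\to\mathcal T_A$ is: $se(\mathsf T)=\mathsf T$, $se(\mathsf F)=\mathsf F$, $se(a)=\mathsf T\unlhd a\unrhd\mathsf F$, $se(\neg P)=se(P)[\mathsf T\mapsto\mathsf F,\mathsf F\mapsto\mathsf T]$, $se(P\land^\circ Q)=se(P)[\mathsf T\mapsto se(Q)]$, $se(P\lor^\circ Q)=se(P)[\mathsf F\mapsto se(Q)]$. The model $\mathbb M_{se}$ is the $\Sigma_{SCL}(A)$-algebra with domain $\{se(P)\mid P\in\mathcal S_A\}$, interpreting $\mathsf T,\mathsf F,a$ as $\mathsf T$, $\mathsf F$, $\mathsf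 T\unlhd a\unrhd\mathsf F$, and $\neg X=X[\mathsf T\mapsto\mathsf F,\mathsf F\mapsto\mathsf T]$, $X\land^\circ Y=X[\mathsf T\mapsto Y]$, $X\lor^\circ Y=X[\mathsf F\mapsto Y]$. (For closed $P$, the interpretation of $P$ in $\mathbb M_{se}$ is $se(P)$.) *)

(* Defs.v *)
Set Implicit Arguments.

Section SCL.
Variable A : Type.

Inductive cterm : Type :=
| cT | cF | cAt (a : A) | cNeg (P : cterm)
| cAnd (P Q : cterm) | cOr (P Q : cterm).

Inductive term : Type :=
| Var (n : nat) | tT | tF | tAt (a : A) | tNeg (t : term)
| tAnd (s t : term) | tOr (s t : term).

Inductive tree : Type :=
| LT | LF | Node (X : tree) (a : A) (Y : tree).

Fixpoint repl (X Y Z : tree) : tree :=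
  match X with
  | LT => Y
  | LF => Z
  | Node X1 a X2 => Node (repl X1 Y Z) a (repl X2 Y Z)
  end.

Fixpoint se (P : cterm) : tree :=
  match P with
  | cT => LT
  | cF => LF
  | cAt a => Node LT a LF
  | cNeg P => repl (se P) LF LT
  | cAnd P Q => repl (se P) (se Q) LF
  | cOr P Q => repl (se P) LT (se Q)
  end.

Definition in_Mse (X : tree) : Prop := exists P : cterm, X = se P.

Fixpoint interp (rho : nat -> tree) (t : term) : tree :=
  match t with
  | Var n => rho n
  | tT => LT
  | tF => LF
  | tAt a => Node LT a LF
  | tNeg s => repl (interp rho s) LF LT
  | tAnd s u => repl (interp rho s) (interp rho u) LF
  | tOr s u => repl (interp rho s) LT (interp rho u)
  end.

Definition Mse_models (s t : term) : Prop :=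
  forall rho : nat -> tree, (forall n, in_Mse (rho n)) -> interp rho s = interp rho t.

Fixpoint subst (sigma : nat -> term) (t : term) : term :=
  match t with
  | Var n => sigma n
  | tT => tT
  | tF => tF
  | tAt a => tAt a
  | tNeg s => tNeg (subst sigma s)
  | tAnd s u => tAnd (subst sigma s) (subst sigma u)
  | tOr s u => tOr (subst sigma s) (subst sigma u)
  end.

Let x := Var 0.
Let y := Var 1.
Let z := Var 2.

Inductive EqFSCL : term -> term -> Prop :=
| F1 : EqFSCL tF (tNeg tT)
| F2 : EqFSCL (tOr x y) (tNeg (tAnd (tNeg x) (tNeg y)))
| F3 : EqFSCL (tNeg (tNeg x)) x
| F4 : EqFSCL (tAnd tT x) x
| F5 : EqFSCL (tOr x tF) x
| F6 : EqFSCL (tAnd tF x) tF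
| F7 : EqFSCL (tAnd (tAnd x y) z) (tAnd x (tAnd y z))
| F8 : EqFSCL (tAnd (tNeg x) tF) (tAnd x tF)
| F9 : EqFSCL (tOr (tAnd x tF) y) (tAnd (tOr x tT) y)
| F10 : EqFSCL (tOr (tAnd x y) (tAnd z tF))
               (tAnd (tOr x (tAnd z tF)) (tOr y (tAnd z tF))).

Inductive derivable (E : term -> term -> Prop) : term -> term -> Prop :=
| d_ax : forall s t, E s t -> derivable E s t
| d_refl : forall t, derivable E t t
| d_sym : forall s t, derivable E s t -> derivable E t s
| d_trans : forall s t u, derivable E s t -> derivable E t u -> derivable E s u
| d_neg : forall s t, derivable E s t -> derivable E (tNeg s) (tNeg t)
| d_and : forall s1 t1 s2 t2, derivable E s1 t1 -> derivable E s2 t2 ->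
    derivable E (tAnd s1 s2) (tAnd t1 t2)
| d_or : forall s1 t1 s2 t2, derivable E s1 t1 -> derivable E s2 t2 ->
    derivable E (tOr s1 s2) (tOr t1 t2)
| d_subst : forall sigma s t, derivable E s t ->
    derivable E (subst sigma s) (subst sigma t).

End SCL.

(* Main.v *)
Require Import Defs.

Lemma repl_assoc (A : Type) (X Y Z U V : tree A) :
  repl (repl X Y Z) U V = repl X (repl Y U V) (repl Z U V).
Proof. induction X; simpl; congruence. Qed.

Lemma repl_id (A : Type) (X : tree A) : repl X (LT A) (LF A) = X.
Proof. induction X; simpl; congruence. Qed.

Lemma interp_subst (A : Type) (rho : nat -> tree A) sigma (t : term A) :
  interp rho (subst sigma t) = interp (fun n => interp rho (sigma n)) t.
Proof. induction t; simpl; congruence. Qed.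

Lemma strong (A : Type) (s t : term A) :
  derivable (@EqFSCL A) s t -> forall rho, interp rho s = interp rho t.
Proof.
  induction 1; intro rho; simpl; try congruence.
  - destruct H; simpl; rewrite ?repl_assoc; simpl; rewrite ?repl_assoc, ?repl_id; simpl;
      try reflexivity.
  - rewrite !interp_subst. apply IHderivable.
Qed.

Theorem theorem2p3 (A : Type) (HA : inhabited A) (s t : term A) :
  derivable (@EqFSCL A) s t -> Mse_models s t.
Proof.
  intros H rho _. apply strong; exact H.
Qed.
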